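(* In a nondeterministic Outcome Logic instance, for every program $C$ (terminating after finitely many steps), outcome assertion $\varphi$ and atomic assertions $Q_1,\ldots,Q_n$: $\not\vDash\langle\varphi\rangle\,C\,\langle\bigoplus_{i=1}^nQ_i\rangle$ holds iff there is an outcome assertion $\varphi'$ with $\varphi'\Rightarrow\varphi$ and $\mathsf{sat}(\varphi')$ such that either (i) $\vDash\langle\varphi'\rangle\,C\,\langle\overline{Q}_i\rangle$ for some $i$, or (ii) $\vDash\langle\varphi'\rangle\,C\,\langle(\bigwedge_{i=1}^n\overline{Q}_i)\oplus\top\rangle$, or (iii) $\vDash\langle\varphi'\rangle\,C\,\langle\top^\oplus\rangle$.
   Context: Nondeterministic instance: powerset monad with $\mathsf{bind}(S,k)=\bigcup_{x\in S}k(x)$, $\mathsf{unit}(x)=\{x\}$, monoid $(2^\Sigma,\cup,\emptyset)$. Programs $C::=\mathbb{0}\mid\mathbb{1}\mid C_1;C_2\mid C_1+C_2\mid C^\star\mid c$ have semantics $[\![\mathbb{0}]\!](\sigma)=\emptyset$, $[\![\mathbb{1}]\!](\sigma)=\{\sigma\}$, $[\![C_1;C_2]\!](\sigma)=\bigcup_{\tau\in[\![C_1]\!](\sigma)}[\![C_2]\!](\tau)$, $[\![C_1+C_2]\!](\sigma)=[\![C_1]\!](\sigma)\cup[\![C_2]\!](\sigma)$, $[\![C^\star]\!]$ the least fixed point of $f\mapsto\lambda\sigma.f^\dagger([\![C]\!](\sigma))\cup\{\sigma\}$ with $f^\dagger(S)=\bigcup_{\sigma\in S}f(\sigma)$. Atomic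 commands are those of the paper's guarded command languages: $\mathsf{assume}\ e$ (returns $\{\sigma\}$ if Boolean expression $e$ is true in $\sigma$, else $\emptyset$) and deterministic commands such as assignment $x:=e$ (and the heap commands of the memory language), whose effect on each state is a single state. Atomic assertions carry a satisfaction relation $\vDash_\Sigma$ on states and are closed under negation $\overline{Q}$ ($\sigma\vDash_\Sigma\overline{Q}$ iff $\sigma\not\vDash_\Sigma Q$); a set $S$ satisfies atomic $P$ iff $S\neq\emptyset$ and all $\sigma\in S$ satisfy $P$. Outcome assertions: $\top,\bot,\top^\oplus,\land,\oplus,\Rightarrow$, atomic; $S\vDash\top^\oplus$ iff $S=\emptyset$; $S\vDash\varphi\oplus\psi$ iff $S=S_1\cup S_2$ with $S_1\vDash\varphi,S_2\vDash\psi$; other connectives classical. $\vDash\langle\varphi\rangle C\langle\psi\rangle$ iff for all $S\subseteq\Sigma$, $S\vDash\varphi$ implies $[\![C]\!]^\dagger(S)\vDash\psi$. $\varphi'\Rightarrow\varphi$ means every set satisfying $\varphi'$ satisfies $\varphi$; $\mathsf{sat}(\varphi')$ means some set satisfies $\varphi'$. *)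

(* Defs.v *)
From Stdlib Require Import List.
Import ListNotations.

Set Implicit Arguments.

Section OL.
Variable Sigma : Type.

Definition stset := Sigma -> Prop.

(* Atomic commands of the guarded command language:
   assume e (e a Boolean expression, evaluated on states) and
   deterministic commands (e.g. assignment), whose effect on each state is a
   single state. *)
Inductive atom_cmd : Type :=
| ACAssume (e : Sigma -> bool)
| ACDet (f : Sigma -> Sigma).

Inductive cmd : Type :=
| CZero
| COne
| CSeq (C1 C2 : cmd)
| CPlus (C1 C2 : cmd)
| CStar (C : cmd)
| CAtom (c : atom_cmd).

(* [eval C s t] means t \in [[C]](s).  For C^*, the inductive definition is
   exactly the least fixed point of f |-> \s. f^dagger([[C]](s)) \cup {s}. *)
Inductive eval : cmd -> Sigma -> Sigma -> Prop :=
| EOne s : eval COne s s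
| ESeq C1 C2 s t u : eval C1 s t -> eval C2 t u -> eval (CSeq C1 C2) s u
| EPlusL C1 C2 s t : eval C1 s t -> eval (CPlus C1 C2) s t
| EPlusR C1 C2 s t : eval C2 s t -> eval (CPlus C1 C2) s t
| EStarRefl C s : eval (CStar C) s s
| EStarStep C s t u : eval C s t -> eval (CStar C) t u -> eval (CStar C) s u
| EAssume e s : e s = true -> eval (CAtom (ACAssume e)) s s
| EDet f s : eval (CAtom (ACDet f)) s (f s).

Definition sem_dag (C : cmd) (S : stset) : stset :=
  fun t => exists s, S s /\ eval C s t.

Definition atom := Sigma -> Prop.
Definition neg_atom (Q : atom) : atom := fun s => ~ Q s.

Inductive oassn : Type :=
| OTop
| OBot
| OTopPlus
| OAnd (p q : oassn)
| OPlus (p q : oassn)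
| OImp (p q : oassn)
| OAtom (P : atom).

Fixpoint osat (phi : oassn) (S : stset) : Prop :=
  match phi with
  | OTop => True
  | OBot => False
  | OTopPlus => forall s, ~ S s
  | OAnd p q => osat p S /\ osat q S
  | OPlus p q => exists S1 S2 : stset,
      (forall s, S s <-> S1 s \/ S2 s) /\ osat p S1 /\ osat q S2
  | OImp p q => osat p S -> osat q S
  | OAtom P => (exists s, S s) /\ (forall s, S s -> P s)
  end.

(* \bigoplus_{i=1}^n Q_i for the nonempty list Q_1 :: [Q_2; ...; Q_n] *)
Fixpoint big_oplus (Q1 : atom) (Qs : list atom) : oassn :=
  match Qs with
  | [] => OAtom Q1
  | Q2 :: Qs' => OPlus (OAtom Q1) (big_oplus Q2 Qs')
  end.

Fixpoint big_and_neg (Q1 : atom) (Qs : list atom) : oassn :=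
  match Qs with
  | [] => OAtom (neg_atom Q1)
  | Q2 :: Qs' => OAnd (OAtom (neg_atom Q1)) (big_and_neg Q2 Qs')
  end.

Definition valid (phi : oassn) (C : cmd) (psi : oassn) : Prop :=
  forall S : stset, osat phi S -> osat psi (sem_dag C S).

Definition oimplies (phi' phi : oassn) : Prop :=
  forall S : stset, osat phi' S -> osat phi S.

Definition osatisfiable (phi : oassn) : Prop := exists S : stset, osat phi S.

End OL.

Arguments CZero {Sigma}.
Arguments COne {Sigma}.
Arguments OTop {Sigma}.
Arguments OBot {Sigma}.
Arguments OTopPlus {Sigma}.

(* Main.v *)
Require Import Defs.
From Stdlib Require Import List Classical.
Import ListNotations.

Section Aux.
Variable Sigma : Type.

Lemma oplus_char (T : stset Sigma) Q1 Qs :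
  osat (big_oplus Q1 Qs) T ->
  (forall t, T t -> exists Q, In Q (Q1 :: Qs) /\ Q t) /\
  (forall Q, In Q (Q1 :: Qs) -> exists t, T t /\ Q t).
Proof.
  revert Q1 T; induction Qs as [|Q2 Qs IH]; intros Q1 T H; simpl in H.
  - destruct H as [[s Hs] Hall]. split.
    + intros t Ht. exists Q1. simpl. auto.
    + intros Q [<-|[]]. eauto.
  - destruct H as [T1 [T2 [Hu [[[s Hs] H1] H2]]]].
    destruct (IH _ _ H2) as [A B]. split.
    + intros t Ht. apply Hu in Ht as [Ht|Ht].
      * exists Q1. simpl; auto.
      * destruct (A t Ht) as [Q [HQ HQt]]. exists Q. simpl in *; tauto.
    + intros Q [<-|HQ].
      * exists s. split; [apply Hu; auto | auto].
      * destruct (B Q HQ) as [t [Ht HQt]]. exists t. split; [apply Hu; auto|auto].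
Qed.

Lemma oplus_build (T : stset Sigma) Q1 Qs :
  (forall t, T t -> exists Q, In Q (Q1 :: Qs) /\ Q t) ->
  (forall Q, In Q (Q1 :: Qs) -> exists t, T t /\ Q t) ->
  osat (big_oplus Q1 Qs) T.
Proof.
  revert Q1 T; induction Qs as [|Q2 Qs IH]; intros Q1 T A B; simpl.
  - split.
    + destruct (B Q1) as [t [Ht _]]; simpl; auto. eauto.
    + intros s Hs. destruct (A s Hs) as [Q [[<-|[]] HQ]]. auto.
  - exists (fun t => T t /\ Q1 t), (fun t => T t /\ exists Q, In Q (Q2 :: Qs) /\ Q t).
    split; [|split].
    + intros s; split.
      * intros Hs. destruct (A s Hs) as [Q [[<-|HQ] HQs]]; [left; auto|right; eauto].
      * tauto.
    + split.
      * destruct (B Q1) as [t [Ht HQ]]; simpl; auto. eauto.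
      * intros s [_ H]; auto.
    + apply IH.
      * intros t [_ H]; auto.
      * intros Q HQ. destruct (B Q) as [t [Ht HQt]]; [simpl; auto|]. exists t; eauto.
Qed.

Lemma and_neg_char (A : stset Sigma) Q1 Qs :
  osat (big_and_neg Q1 Qs) A <->
  (exists s, A s) /\ (forall t, A t -> forall Q, In Q (Q1 :: Qs) -> ~ Q t).
Proof.
  revert Q1; induction Qs as [|Q2 Qs IH]; intros Q1; simpl.
  - unfold neg_atom. split.
    + intros [H1 H2]. split; auto. intros t Ht Q [E|[]]; subst; auto.
    + intros [H1 H2]. split; [auto|]. intros t Ht. apply (H2 t Ht Q1); simpl; auto.
  - rewrite IH. unfold neg_atom. split.
    + intros [[H1 H2] [H3 H4]]. split; auto. intros t Ht Q [<-|HQ]; [auto|].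
      apply (H4 t Ht Q); simpl; auto.
    + intros [H1 H2]. split; split; auto.
      all: intros t Ht; try intros Q HQ; [apply (H2 t Ht Q1)|apply (H2 t Ht Q)]; simpl in *; auto.
Qed.

Definition Sub (S : stset Sigma) : oassn Sigma :=
  OImp (OImp (OAtom S) OBot) OTopPlus.

Lemma Sub_sem S S' : osat (Sub S) S' <-> forall x, S' x -> S x.
Proof.
  simpl. split.
  - intros H x Hx. destruct (classic (forall y, S' y -> S y)) as [Hy|Hy]; auto.
    exfalso. apply (H (fun '(conj _ h) => Hy h) x Hx).
  - intros H Hn s Hs. apply Hn. split; eauto.
Qed.

Definition Contains (s : Sigma) : oassn Sigma :=
  OPlus (OAtom (fun x => x = s)) OTop.

Lemma Contains_sem s S' : osat (Contains s) S' <-> S' s.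
Proof.
  simpl. split.
  - intros [S1 [S2 [Hu [[[x Hx] H1] _]]]]. apply Hu. left. rewrite <- (H1 x Hx). auto.
  - intros H. exists (fun x => x = s), S'. split; [|split; [split|]]; eauto.
    intros x; split; [tauto|]. intros [->|]; auto.
Qed.

End Aux.
Arguments Sub {Sigma}.
Arguments Contains {Sigma}.

Theorem theorem5p6 (Sigma : Type) (C : cmd Sigma) (phi : oassn Sigma)
    (Q1 : atom Sigma) (Qs : list (atom Sigma)) :
  ~ valid phi C (big_oplus Q1 Qs)
  <->
  exists phi' : oassn Sigma,
    oimplies phi' phi /\ osatisfiable phi' /\
    ( (exists Qi, In Qi (Q1 :: Qs) /\ valid phi' C (OAtom (neg_atom Qi)))
      \/ valid phi' C (OPlus (big_and_neg Q1 Qs) OTop)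
      \/ valid phi' C OTopPlus ).
Proof.
  split.
  - intros Hnv.
    assert (HS : exists S, osat phi S /\ ~ osat (big_oplus Q1 Qs) (sem_dag C S)).
    { apply NNPP; intro Hc. apply Hnv. intros S HS.
      apply NNPP; intro Hc2. apply Hc; eauto. }
    destruct HS as [S [HphiS HnT]].
    set (T := sem_dag C S) in *.
    destruct (classic (exists t, T t)) as [[t0 Ht0]|Hemp].
    2:{
      exists (OAnd phi (Sub S)). split; [intros S' [H _]; auto|]. split.
      { exists S. split; auto. apply Sub_sem; auto. }
      right; right. intros S' [_ HS'] s [x [Hx Hev]]. rewrite Sub_sem in HS'.
      apply Hemp. exists s. exists x; split; auto. }
    destruct (classic (exists t, T t /\ forall Q, In Q (Q1 :: Qs) -> ~ Q t))
      as [[t [Ht Hneg]]|Hnn].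
    + destruct Ht as [s [Hs Hev]].
      exists (OAnd phi (Contains s)). split; [intros S' [H _]; auto|]. split.
      { exists S. split; auto. apply Contains_sem; auto. }
      right; left. intros S' [_ HS']. rewrite Contains_sem in HS'.
      exists (fun x => x = t), (sem_dag C S'). split; [|split].
      * intros x; split; [tauto|]. intros [->|]; auto. exists s; auto.
      * apply and_neg_char. split; eauto. intros y -> ; auto.
      * exact I.
    + assert (Hex : exists Qi, In Qi (Q1 :: Qs) /\ forall t, T t -> ~ Qi t).
      { apply NNPP; intro Hc. apply HnT. apply oplus_build.
        - intros t Ht. apply NNPP; intro Hc2. apply Hnn. exists t. split; auto.
          intros Q HQ HQt. apply Hc2; eauto.
        - intros Q HQ. apply NNPP; intro Hc2. apply Hc. exists Q. split; auto.
          intros t Ht HQt. apply Hc2; eauto. }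
      destruct Hex as [Qi [HQi Hno]].
      destruct Ht0 as [s0 [Hs0 Hev0]].
      exists (OAnd phi (OAnd (Sub S) (Contains s0))).
      split; [intros S' [H _]; auto|]. split.
      { exists S. split; auto. split; [apply Sub_sem; auto|apply Contains_sem; auto]. }
      left. exists Qi. split; auto.
      intros S' [_ [HS1 HS2]]. rewrite Sub_sem in HS1. rewrite Contains_sem in HS2.
      split.
      * exists t0, s0; auto.
      * intros y [x [Hx Hev]]. unfold neg_atom. apply Hno. exists x; auto.
  - intros [phi' [Himp [[S HS] Hcase]]] Hv.
    pose proof (Hv S (Himp S HS)) as HT.
    apply oplus_char in HT as [A B].
    destruct Hcase as [[Qi [HQi Hval]]|[Hval|Hval]]; specialize (Hval S HS).
    + destruct Hval as [_ Hall]. destruct (B Qi HQi) as [t [Ht HQt]].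
      exact (Hall t Ht HQt).
    + destruct Hval as [S1 [S2 [Hu [H1 _]]]]. apply and_neg_char in H1.
      destruct H1 as [[s Hs] Hn]. assert (Ht : sem_dag C S s) by (apply Hu; auto).
      destruct (A s Ht) as [Q [HQ HQs]]. exact (Hn s Hs Q HQ HQs).
    + destruct (B Q1) as [t [Ht _]]; [simpl; auto|]. exact (Hval t Ht).
Qed.
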